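(* Let $\mathcal{P}$ be a finite poset and let $L=\mathfrak{g}(\mathcal{P})$ or $L=\mathfrak{g}_A(\mathcal{P})$. Then $b(L)=|Rel(\mathcal{P})|$.
   Context: All Lie algebras are over an algebraically closed field $\mathbf{k}$ of characteristic zero. A finite poset $(\mathcal{P},\preceq)$ has underlying set $\{1,\dots,n\}$, labeled so that $x\preceq y$ implies $x\le y$ as integers. Write $x\prec y$ if $x\preceq y$ and $x\neq y$; $Rel(\mathcal{P})$ is the set of strict relations of $\mathcal{P}$. The Lie poset algebra $\mathfrak{g}(\mathcal{P})$ is the Lie subalgebra of $\mathfrak{gl}(n,\mathbf{k})$ spanned by the matrix units $E_{i,j}$ with $i\preceq j$, with bracket $[X,Y]=XY-YX$; $\mathfrak{g}_A(\mathcal{P})$ is its subalgebra of trace-zero elements. The breadth of a Lie algebra $L$ is $b(L)=\max_{x\in L}\operatorname{rank}(\mathrm{ad}_x)$, where $\mathrm{ad}_x=[x,-]:L\to L$. *)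

(* Defs.v *)
From HB Require Import structures.
From mathcomp Require Import all_boot all_order all_algebra.
Set Implicit Arguments. Unset Strict Implicit. Unset Printing Implicit Defensive.
Import GRing.Theory.
Local Open Scope ring_scope.

(* A poset on {0,...,n-1} (i.e. {1,...,n} shifted), with a labeling
   compatible with the natural order. *)
Definition labeled_poset (n : nat) (le : rel 'I_n) : Prop :=
  [/\ reflexive le, antisymmetric le, transitive le &
      forall i j : 'I_n, le i j -> (i <= j)%N].

Definition Rel (n : nat) (le : rel 'I_n) : {set 'I_n * 'I_n} :=
  [set p | le p.1 p.2 && (p.1 != p.2)].

Definition lie_poset (k : fieldType) (n : nat) (le : rel 'I_n)
  : {vspace 'M[k]_n} :=
  <<[seq delta_mx p.1 p.2 | p <- enum [pred p : 'I_n * 'I_n | le p.1 p.2]]>>%VS.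

Definition trace_fun (k : fieldType) (n : nat) : 'Hom('M[k]_n, k^o) :=
  linfun (fun A : 'M[k]_n => (\tr A : k^o)).

Definition lie_poset_A (k : fieldType) (n : nat) (le : rel 'I_n)
  : {vspace 'M[k]_n} :=
  (lie_poset k le :&: lker (trace_fun k n))%VS.

Definition ad (k : fieldType) (n : nat) (x : 'M[k]_n) : 'End('M[k]_n) :=
  linfun (fun y : 'M[k]_n => x *m y - y *m x).

(* rank of ad_x : L -> L  (its image lies in L when x \in L and L is a
   Lie subalgebra) *)
Definition ad_rank (k : fieldType) (n : nat) (L : {vspace 'M[k]_n})
  (x : 'M[k]_n) : nat := \dim (ad x @: L)%VS.

Definition is_breadth (k : fieldType) (n : nat) (L : {vspace 'M[k]_n})
  (b : nat) : Prop :=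
  (exists2 x, x \in L & ad_rank L x = b) /\
  (forall x, x \in L -> (ad_rank L x <= b)%N).

(* Main.v *)
From HB Require Import structures.
Require Import Defs.
From mathcomp Require Import all_boot all_order all_algebra.
Set Implicit Arguments. Unset Strict Implicit. Unset Printing Implicit Defensive.
Import GRing.Theory.
Local Open Scope ring_scope.

Definition adfun (k : fieldType) (n : nat) (x y : 'M[k]_n) := x *m y - y *m x.
Fact adfun_lin (k : fieldType) (n : nat) (x : 'M[k]_n) : linear (adfun x).
Proof.
move=> a y z; rewrite /adfun mulmxDr mulmxDl -scalemxAr -scalemxAl.
by rewrite scalerBr opprD addrACA.
Qed.
HB.instance Definition _ (k : fieldType) (n : nat) (x : 'M[k]_n) :=
  GRing.isLinear.Build k 'M[k]_n 'M[k]_n _ (adfun x) (adfun_lin x).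

Lemma adE (k : fieldType) (n : nat) (x y : 'M[k]_n) : ad x y = x *m y - y *m x.
Proof. exact: (lfunE (adfun x) y). Qed.

Definition trf (k : fieldType) (n : nat) (y : 'M[k]_n) : k^o := \tr y.
Fact trf_lin (k : fieldType) (n : nat) : linear (@trf k n).
Proof. by move=> a y z; rewrite /trf mxtraceD mxtraceZ. Qed.
HB.instance Definition _ (k : fieldType) (n : nat) :=
  GRing.isLinear.Build k 'M[k]_n k^o _ (@trf k n) (@trf_lin k n).
Lemma traceE (k : fieldType) (n : nat) (y : 'M[k]_n) : trace_fun k n y = \tr y.
Proof. exact: (lfunE (@trf k n) y). Qed.

Notation DS k n s := (<<[seq (delta_mx p.1 p.2 : 'M[k]_n) | p <- s]>>%VS).

Lemma memD_entries (k : fieldType) (n : nat) (s : seq ('I_n * 'I_n)) (A : 'M[k]_n) :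
  A \in DS k n s -> forall i j, (i, j) \notin s -> A i j = 0.
Proof.
elim: s A => [|p s IH] A /=.
  by rewrite span_nil memv0 => /eqP -> i j _; rewrite mxE.
rewrite span_cons => /memv_addP [a /vlineP [c ->] [b bs ->]] i j.
rewrite inE negb_or => /andP[ne nin].
rewrite !mxE (IH b bs i j nin) addr0.
case: p ne => [a1 a2] /=; rewrite xpair_eqE => /negbTE ->.
by rewrite mulr0.
Qed.

Lemma entries_memD (k : fieldType) (n : nat) (s : seq ('I_n * 'I_n)) (A : 'M[k]_n) :
  (forall i j, (i, j) \notin s -> A i j = 0) -> A \in DS k n s.
Proof.
move=> H; rewrite [A]matrix_sum_delta; apply: memv_suml => i _.
apply: memv_suml => j _.
case: (boolP ((i, j) \in s)) => h.
  by apply: memvZ; apply: memv_span; apply/mapP; exists (i, j).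
by rewrite H // scale0r mem0v.
Qed.

Lemma free_D (k : fieldType) (n : nat) (s : seq ('I_n * 'I_n)) :
  uniq s -> free [seq (delta_mx p.1 p.2 : 'M[k]_n) | p <- s].
Proof.
elim: s => [|p s IH] /=; first by move=> _; exact: nil_free.
case/andP => ps us; rewrite free_cons IH // andbT.
apply/negP => /memD_entries /(_ p.1 p.2).
rewrite -surjective_pairing => /(_ ps) /eqP.
by rewrite mxE !eqxx /= oner_eq0.
Qed.

Lemma dim_D (k : fieldType) (n : nat) (s : seq ('I_n * 'I_n)) :
  uniq s -> \dim (DS k n s) = size s.
Proof. by move/(free_D k)/eqP; rewrite size_map. Qed.

Lemma inLP (k : fieldType) (n : nat) (le : rel 'I_n) (A : 'M[k]_n) :
  A \in lie_poset k le <-> (forall i j, ~~ le i j -> A i j = 0).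
Proof.
split.
  by move=> /memD_entries H i j nl; apply: H; rewrite mem_enum inE.
by move=> H; apply: entries_memD => i j; rewrite mem_enum inE /=; apply: H.
Qed.

Lemma bracket_Rel (k : fieldType) (n : nat) (le : rel 'I_n) (hP : labeled_poset le)
  (x u : 'M[k]_n) :
  x \in lie_poset k le -> u \in lie_poset k le ->
  x *m u - u *m x \in DS k n (enum (Rel le)).
Proof.
case: hP => hrefl hanti htr _.
have help : forall (a b : 'M[k]_n), a \in lie_poset k le -> b \in lie_poset k le ->
  forall i j l, ~~ (le i l && le l j) -> a i l * b l j = 0.
  move=> a b /inLP ha /inLP hb i j l.
  case: (boolP (le i l)) => h1 /=.
    by move=> h2; rewrite (hb _ _ h2) mulr0.
  by move=> _; rewrite (ha _ _ h1) mul0r.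
move=> xL uL; apply: entries_memD => i j.
rewrite mem_enum inE /= negb_and negbK => H.
rewrite !mxE.
case: (boolP (le i j)) => lij.
  rewrite lij /= in H; move/eqP: H => <-.
  rewrite (bigD1 i) //= big1 ?addr0; last first.
    move=> l /negbTE nl; apply: help => //; apply/negP => /andP[h1 h2].
    by have e := hanti i l (introT andP (conj h1 h2)); rewrite e eqxx in nl.
  rewrite (bigD1 i) //= big1 ?addr0; last first.
    move=> l /negbTE nl; apply: help => //; apply/negP => /andP[h1 h2].
    by have e := hanti i l (introT andP (conj h1 h2)); rewrite e eqxx in nl.
  by rewrite mulrC subrr.
rewrite !big1 ?subrr // => l _; apply: help => //; apply/negP => /andP[h1 h2].
  by rewrite (htr _ _ _ h1 h2) in lij.
by rewrite (htr _ _ _ h1 h2) in lij.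
Qed.

Lemma upper (k : fieldType) (n : nat) (le : rel 'I_n) (hP : labeled_poset le)
  (U : {vspace 'M[k]_n}) (x : 'M[k]_n) :
  (U <= lie_poset k le)%VS -> x \in lie_poset k le -> (ad_rank U x <= #|Rel le|)%N.
Proof.
move=> /subvP UL xL; rewrite /ad_rank.
have -> : #|Rel le| = \dim (DS k n (enum (Rel le))).
  by rewrite dim_D ?enum_uniq // -cardE.
apply: dimvS; apply/subvP => v /memv_imgP [u uU ->].
by rewrite adE; apply: bracket_Rel => //; apply: UL.
Qed.

Lemma natr_neq (k : fieldType) (hchar : [pchar k]%R =i pred0) (a b : nat) :
  a != b -> (a%:R - b%:R : k) != 0.
Proof.
move=> ab; have h0 := (pcharf0P k).1 hchar.
case: (ltngtP a b) => h.
- rewrite -opprB -natrB ?(ltnW h) // oppr_eq0 h0 subn_eq0 -ltnNge //.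
- by rewrite -natrB ?(ltnW h) // h0 subn_eq0 -ltnNge.
- by rewrite h eqxx in ab.
Qed.

Lemma lower (k : fieldType) (hchar : [pchar k]%R =i pred0) (n : nat) (le : rel 'I_n)
  (hP : labeled_poset le) :
  exists2 x, x \in lie_poset_A k le & ad_rank (lie_poset_A k le) x = #|Rel le|.
Proof.
have hP' := hP; case: hP' => hrefl hanti htr _.
pose d : 'rV[k]_n := \row_(i < n) (i : nat)%:R.
pose D := diag_mx d.
pose c := \tr D / n%:R.
pose x0 := D - c%:M.
have x0L : x0 \in lie_poset k le.
  apply/inLP => i j nl; have ij : i != j.
    by apply: contra nl => /eqP ->.
  by rewrite !mxE (negbTE ij) !mulr0n subrr.
have x0tr : \tr x0 = 0.
  have [n0|npos] := posnP n.
    by rewrite /mxtrace big1 // => i; have := ltn_ord i; rewrite {2}n0.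
  rewrite /x0 linearB /= mxtrace_scalar -mulr_natr /c divfK ?subrr //.
  by rewrite ((pcharf0P k).1 hchar) -lt0n.
have x0A : x0 \in lie_poset_A k le.
  by rewrite /lie_poset_A memv_cap x0L memv_ker traceE x0tr eqxx.
exists x0 => //.
apply/eqP; rewrite eqn_leq upper //; last exact: capvSl.
have -> : #|Rel le| = \dim (DS k n (enum (Rel le))).
  by rewrite dim_D ?enum_uniq // -cardE.
apply: dimvS; apply/span_subvP => v /mapP [[i j]]; rewrite mem_enum inE /=.
case/andP => lij ij -> /=.
pose e : k := (i : nat)%:R - (j : nat)%:R.
have e0 : e != 0 by apply: natr_neq.
pose y : 'M[k]_n := e^-1 *: delta_mx i j.
apply/memv_imgP; exists y.
  rewrite /lie_poset_A memv_cap memv_ker traceE; apply/andP; split.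
    by apply: memvZ; apply: memv_span; apply/mapP; exists (i, j) => //; rewrite mem_enum inE.
  rewrite mxtraceZ /mxtrace big1 ?mulr0 // => l _; rewrite mxE.
  by case: (l =P i) => [-> |] //=; rewrite (negbTE ij).
rewrite adE /x0 mulmxBl mulmxBr mul_scalar_mx mul_mx_scalar opprB addrA subrK.
rewrite mul_diag_mx mul_mx_diag; apply/matrixP => a b; rewrite !mxE.
case: (a =P i) => [-> | _]; case: (b =P j) => [-> | _] /=;
  rewrite ?mulr0 ?mul0r ?subr0 //.
by rewrite !mulr1 mulrC -mulrBr mulVf.
Qed.

Theorem theorem1 (k : closedFieldType) (hchar : ([pchar k]%R =i pred0))
  (n : nat) (le : rel 'I_n) (hP : labeled_poset le) :
  is_breadth (lie_poset k le) #|Rel le| /\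
  is_breadth (lie_poset_A k le) #|Rel le|.
Proof.
have [x0 x0A hx0] := lower hchar hP.
have x0L : x0 \in lie_poset k le by move: x0A; rewrite memv_cap => /andP[].
split; split.
- exists x0 => //; apply/eqP; rewrite eqn_leq upper //= -{1}hx0.
  by apply: dimvS; apply: limgS; apply: capvSl.
- by move=> x xL; apply: upper.
- by exists x0.
- move=> x; rewrite memv_cap => /andP[xL _]; apply: upper => //; exact: capvSl.
Qed.
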